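(* For real $p\neq 0$, the inequality $\left( \frac{\sinh x}{x}\right) ^{2p}+\left( \frac{\tanh x}{x}\right) ^{p}>2$ holds for all $x\in(0,\infty)$ if and only if $p>0$ or $p\leq -3/5$. *)

(* Defs.v *)
From Stdlib Require Import Reals.
Open Scope R_scope.

(* Main.v *)
Require Import Defs.
From Stdlib Require Import Reals.
Open Scope R_scope.
From Coquelicot Require Import Coquelicot.
From Stdlib Require Import Reals Lra Lia List Factorial.
Import ListNotations.
Open Scope R_scope.


Fixpoint ep (l : list (R*nat*R)) (x:R) : R :=
  match l with nil => 0 | (v,j,k)::t => v * x^j * exp(k*x) + ep t x end.
Definition bas (j:nat) (k:R) (n:nat) : R :=
  if Nat.leb j n then k^(n-j) / INR (fact (n-j)) else 0.
Fixpoint co (l : list (R*nat*R)) (n:nat) : R :=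
  match l with nil => 0 | (v,j,k)::t => v * bas j k n + co t n end.

Lemma PS_incr_n_eq (a : nat -> R) j n :
  PS_incr_n a j n = if Nat.leb j n then a (n - j)%nat else 0.
Proof.
  revert n; induction j as [|j IH]; intros n.
  - simpl. now rewrite Nat.sub_0_r.
  - simpl. unfold PS_incr_1. destruct n as [|n]. reflexivity.
    rewrite IH. reflexivity.
Qed.

Lemma bas_series j k x : is_pseries (bas j k) x (x^j * exp (k*x)).
Proof.
  assert (H1 : is_pseries (fun n => k^n / INR (fact n)) x (exp (k*x))).
  { apply is_pseries_R. generalize (is_exp_Reals (k*x)). intro H.
    apply is_pseries_R in H. eapply is_series_ext; [|exact H].
    intro n; simpl. rewrite Rpow_mult_distr. unfold Rdiv. ring. }
  generalize (is_pseries_incr_n _ j _ _ H1). intro H2.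
  eapply is_pseries_ext; [|exact H2].
  - intro n. rewrite PS_incr_n_eq. unfold bas. reflexivity.
Qed.

Lemma ep_series l x : is_pseries (co l) x (ep l x).
Proof.
  induction l as [|[[v j] k] t IH]; simpl.
  - generalize (is_pseries_scal 0 _ _ _ (Rmult_comm _ _) (bas_series 0 0 x)).
    intro H. apply is_pseries_R in H. apply is_pseries_R.
    unfold scal in H; simpl in H; unfold mult in H; simpl in H.
    rewrite Rmult_0_l in H.
    eapply is_series_ext; [|exact H]. intro n. unfold PS_scal, scal; simpl.
    unfold mult; simpl. ring.
  - generalize (is_pseries_scal v _ _ _ (Rmult_comm _ _) (bas_series j k x)).
    intro H. generalize (is_pseries_plus _ _ _ _ _ H IH). intro H2.
    apply is_pseries_R in H2. apply is_pseries_R.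
    unfold plus, scal in H2; simpl in H2; unfold mult in H2; simpl in H2.
    rewrite <- Rmult_assoc in H2.
    eapply is_series_ext; [|exact H2].
    intro n. reflexivity.
Qed.

Lemma sum_n_nonneg (f : nat -> R) n : (forall k, 0 <= f k) -> 0 <= sum_n f n.
Proof.
  intro H; induction n. rewrite sum_O. apply H.
  rewrite sum_Sn. unfold plus; simpl. specialize (H (S n)). lra.
Qed.

Lemma pseries_pos (a : nat -> R) (x l : R) (m : nat) : is_pseries a x l -> 0 < x ->
  (forall n, 0 <= a n) -> 0 < a m -> 0 < l.
Proof.
  intros H Hx Ha Hm. apply is_pseries_R in H.
  assert (Hf : forall n, 0 <= a n * x ^ n).
  { intro n. apply Rmult_le_pos. apply Ha. apply pow_le; lra. }
  assert (Hinc : forall n, sum_n (fun n => a n * x^n) n <= sum_n (fun n => a n * x^n) (S n)).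
  { intro n. rewrite sum_Sn. unfold plus; simpl. specialize (Hf (S n)). simpl in Hf. lra. }
  generalize (is_lim_seq_incr_compare _ _ H Hinc m). intro Hle.
  assert (Hp : 0 < a m * x ^ m). apply Rmult_lt_0_compat. auto. apply pow_lt; lra.
  assert (0 < sum_n (fun n => a n * x^n) m).
  { destruct m. rewrite sum_O. exact Hp.
    rewrite sum_Sn. unfold plus; simpl.
    generalize (sum_n_nonneg (fun n => a n * x^n) m Hf). simpl in Hp.
    lra. }
  eapply Rlt_le_trans; [exact H0| exact Hle].
Qed.

Lemma INR_fact_S n : INR (fact (S n)) = (INR n + 1) * INR (fact n).
Proof. rewrite fact_simpl, mult_INR, S_INR. ring. Qed.
Lemma negpow (q:positive) p : IZR (Zneg q) ^ p = (-1)^p * IZR (Zpos q) ^ p.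
Proof. rewrite IZR_NEG, <- Rpow_mult_distr. f_equal. ring. Qed.
Lemma np2 p : (-2)^p = (-1)^p * 2^p. Proof. apply negpow. Qed.
Lemma np3 p : (-3)^p = (-1)^p * 3^p. Proof. apply negpow. Qed.
Lemma np5 p : (-5)^p = (-1)^p * 5^p. Proof. apply negpow. Qed.
Lemma div_nn a b : 0 <= a -> 0 < b -> 0 <= a / b. Proof. intros; apply Rle_mult_inv_pos; auto. Qed.
Lemma bern (a:R) m : 0 <= a -> 1 + INR m * a <= (1+a)^m.
Proof. intro Ha. induction m. simpl; lra. rewrite S_INR. simpl.
  assert (0 <= INR m * a * a) by (apply Rmult_le_pos; [apply Rmult_le_pos; [apply pos_INR|]|]; lra). nra. Qed.
Definition lF1 : list (R*nat*R) := [((-1/2),0%nat,(-1));((1/2),0%nat,(1));((-1),1%nat,(0))].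
Definition NumF1 (p:nat) : R := (-1/2) * (-1)^2 * (-1)^p + (1/2) * (1)^2.
Lemma co_F1_eq p : co lF1 (2+p) = NumF1 p / (INR (fact p) * ((INR p + 1) * (INR p + 2))).
Proof. unfold lF1, co, bas, NumF1. cbn [Nat.leb Nat.sub pow Nat.add].
  repeat rewrite INR_fact_S. rewrite ?S_INR, ?np2, ?np3, ?np5, ?pow1.
  generalize (INR_fact_lt_0 p) (pos_INR p); intros. field; lra. Qed.

Definition lF2 : list (R*nat*R) := [((1/2),0%nat,(-1));((-1/2),0%nat,(1));((1/2),1%nat,(-1));((1/2),1%nat,(1))].
Definition NumF2 (p:nat) : R := (1/2) * (-1)^2 * (-1)^p + (-1/2) * (1)^2 + (1/2) * (-1)^1 * (-1)^p * (INR p + 2) + (1/2) * (1)^1 * (INR p + 2).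
Lemma co_F2_eq p : co lF2 (2+p) = NumF2 p / (INR (fact p) * ((INR p + 1) * (INR p + 2))).
Proof. unfold lF2, co, bas, NumF2. cbn [Nat.leb Nat.sub pow Nat.add].
  repeat rewrite INR_fact_S. rewrite ?S_INR, ?np2, ?np3, ?np5, ?pow1.
  generalize (INR_fact_lt_0 p) (pos_INR p); intros. field; lra. Qed.

Definition lF3 : list (R*nat*R) := [((-1/4),0%nat,(-2));((1/4),0%nat,(2));((-1),1%nat,(0))].
Definition NumF3 (p:nat) : R := (-1/4) * (-2)^2 * ((-1)^p * 2^p) + (1/4) * (2)^2 * 2^p.
Lemma co_F3_eq p : co lF3 (2+p) = NumF3 p / (INR (fact p) * ((INR p + 1) * (INR p + 2))).
Proof. unfold lF3, co, bas, NumF3. cbn [Nat.leb Nat.sub pow Nat.add].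
  repeat rewrite INR_fact_S. rewrite ?S_INR, ?np2, ?np3, ?np5, ?pow1.
  generalize (INR_fact_lt_0 p) (pos_INR p); intros. field; lra. Qed.

Definition lF4 : list (R*nat*R) := [((1/4),0%nat,(-2));((-1/4),0%nat,(2));((1/2),1%nat,(-2));((1/2),1%nat,(2))].
Definition NumF4 (p:nat) : R := (1/4) * (-2)^2 * ((-1)^p * 2^p) + (-1/4) * (2)^2 * 2^p + (1/2) * (-2)^1 * ((-1)^p * 2^p) * (INR p + 2) + (1/2) * (2)^1 * 2^p * (INR p + 2).
Lemma co_F4_eq p : co lF4 (2+p) = NumF4 p / (INR (fact p) * ((INR p + 1) * (INR p + 2))).
Proof. unfold lF4, co, bas, NumF4. cbn [Nat.leb Nat.sub pow Nat.add].
  repeat rewrite INR_fact_S. rewrite ?S_INR, ?np2, ?np3, ?np5, ?pow1.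
  generalize (INR_fact_lt_0 p) (pos_INR p); intros. field; lra. Qed.

Definition lP1 : list (R*nat*R) := [((3/4),0%nat,(-2));((-3/4),0%nat,(2));((1/2),1%nat,(-2));((2),1%nat,(0));((1/2),1%nat,(2))].
Definition NumP1 (p:nat) : R := (3/4) * (-2)^2 * ((-1)^p * 2^p) + (-3/4) * (2)^2 * 2^p + (1/2) * (-2)^1 * ((-1)^p * 2^p) * (INR p + 2) + (1/2) * (2)^1 * 2^p * (INR p + 2).
Lemma co_P1_eq p : co lP1 (2+p) = NumP1 p / (INR (fact p) * ((INR p + 1) * (INR p + 2))).
Proof. unfold lP1, co, bas, NumP1. cbn [Nat.leb Nat.sub pow Nat.add].
  repeat rewrite INR_fact_S. rewrite ?S_INR, ?np2, ?np3, ?np5, ?pow1.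
  generalize (INR_fact_lt_0 p) (pos_INR p); intros. field; lra. Qed.

Definition lP2 : list (R*nat*R) := [((-3/4),0%nat,(-2));((3/4),0%nat,(2));((-1/2),1%nat,(-2));((-2),1%nat,(0));((-1/2),1%nat,(2));((-1/2),2%nat,(-2));((1/2),2%nat,(2));((-2),3%nat,(0))].
Definition NumP2 (p:nat) : R := (-3/4) * (-2)^4 * ((-1)^p * 2^p) + (3/4) * (2)^4 * 2^p + (-1/2) * (-2)^3 * ((-1)^p * 2^p) * (INR p + 4) + (-1/2) * (2)^3 * 2^p * (INR p + 4) + (-1/2) * (-2)^2 * ((-1)^p * 2^p) * (INR p + 4) * (INR p + 3) + (1/2) * (2)^2 * 2^p * (INR p + 4) * (INR p + 3).
Lemma co_P2_eq p : co lP2 (4+p) = NumP2 p / (INR (fact p) * ((INR p + 1) * (INR p + 2) * (INR p + 3) * (INR p + 4))).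
Proof. unfold lP2, co, bas, NumP2. cbn [Nat.leb Nat.sub pow Nat.add].
  repeat rewrite INR_fact_S. rewrite ?S_INR, ?np2, ?np3, ?np5, ?pow1.
  generalize (INR_fact_lt_0 p) (pos_INR p); intros. field; lra. Qed.

Definition lP4 : list (R*nat*R) := [((-3/2),0%nat,(-1));((3/2),0%nat,(1));((-3/2),1%nat,(-1));((-3/2),1%nat,(1));((-1/2),2%nat,(-1));((1/2),2%nat,(1))].
Definition NumP4 (p:nat) : R := (-3/2) * (-1)^3 * (-1)^p + (3/2) * (1)^3 + (-3/2) * (-1)^2 * (-1)^p * (INR p + 3) + (-3/2) * (1)^2 * (INR p + 3) + (-1/2) * (-1)^1 * (-1)^p * (INR p + 3) * (INR p + 2) + (1/2) * (1)^1 * (INR p + 3) * (INR p + 2).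
Lemma co_P4_eq p : co lP4 (3+p) = NumP4 p / (INR (fact p) * ((INR p + 1) * (INR p + 2) * (INR p + 3))).
Proof. unfold lP4, co, bas, NumP4. cbn [Nat.leb Nat.sub pow Nat.add].
  repeat rewrite INR_fact_S. rewrite ?S_INR, ?np2, ?np3, ?np5, ?pow1.
  generalize (INR_fact_lt_0 p) (pos_INR p); intros. field; lra. Qed.

Definition lP5 : list (R*nat*R) := [((3/4),0%nat,(-2));((-3/4),0%nat,(2));((1/2),1%nat,(-2));((2),1%nat,(0));((1/2),1%nat,(2));((1/10),2%nat,(-2));((-1/10),2%nat,(2));((2/5),3%nat,(0));((-1/2),4%nat,(-2));((1/2),4%nat,(2));((-2),5%nat,(0))].
Definition NumP5 (p:nat) : R := (3/4) * (-2)^6 * ((-1)^p * 2^p) + (-3/4) * (2)^6 * 2^p + (1/2) * (-2)^5 * ((-1)^p * 2^p) * (INR p + 6) + (1/2) * (2)^5 * 2^p * (INR p + 6) + (1/10) * (-2)^4 * ((-1)^p * 2^p) * (INR p + 6) * (INR p + 5) + (-1/10) * (2)^4 * 2^p * (INR p + 6) * (INR p + 5) + (-1/2) * (-2)^2 * ((-1)^p * 2^p) * (INR p + 6) * (INR p + 5) * (INR p + 4) * (INR p + 3) + (1/2) * (2)^2 * 2^p * (INR p + 6) * (INR p + 5) * (INR p + 4) * (INR p + 3).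
Lemma co_P5_eq p : co lP5 (6+p) = NumP5 p / (INR (fact p) * ((INR p + 1) * (INR p + 2) * (INR p + 3) * (INR p + 4) * (INR p + 5) * (INR p + 6))).
Proof. unfold lP5, co, bas, NumP5. cbn [Nat.leb Nat.sub pow Nat.add].
  repeat rewrite INR_fact_S. rewrite ?S_INR, ?np2, ?np3, ?np5, ?pow1.
  generalize (INR_fact_lt_0 p) (pos_INR p); intros. field; lra. Qed.

Definition lG : list (R*nat*R) := [((-3/32),0%nat,(-5));((3/32),0%nat,(-3));((3/16),0%nat,(-1));((-3/16),0%nat,(1));((-3/32),0%nat,(3));((3/32),0%nat,(5));((-7/16),1%nat,(-5));((3/16),1%nat,(-3));((1/4),1%nat,(-1));((1/4),1%nat,(1));((3/16),1%nat,(3));((-7/16),1%nat,(5));((-3/16),2%nat,(-5));((-11/16),2%nat,(-3));((-3/2),2%nat,(-1));((3/2),2%nat,(1));((11/16),2%nat,(3));((3/16),2%nat,(5));((1/2),3%nat,(-3));((-2),3%nat,(-1));((-2),3%nat,(1));((1/2),3%nat,(3))].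
Definition NumG (p:nat) : R := (-3/32) * (-5)^4 * ((-1)^p * 5^p) + (3/32) * (-3)^4 * ((-1)^p * 3^p) + (3/16) * (-1)^4 * (-1)^p + (-3/16) * (1)^4 + (-3/32) * (3)^4 * 3^p + (3/32) * (5)^4 * 5^p + (-7/16) * (-5)^3 * ((-1)^p * 5^p) * (INR p + 4) + (3/16) * (-3)^3 * ((-1)^p * 3^p) * (INR p + 4) + (1/4) * (-1)^3 * (-1)^p * (INR p + 4) + (1/4) * (1)^3 * (INR p + 4) + (3/16) * (3)^3 * 3^p * (INR p + 4) + (-7/16) * (5)^3 * 5^p * (INR p + 4) + (-3/16) * (-5)^2 * ((-1)^p * 5^p) * (INR p + 4) * (INR p + 3) + (-11/16) * (-3)^2 * ((-1)^p * 3^p) * (INR p + 4) * (INR p + 3) + (-3/2) * (-1)^2 * (-1)^p * (INR p + 4) * (INR p + 3) + (3/2) * (1)^2 * (INR p + 4) * (INR p + 3) + (11/16) * (3)^2 * 3^p * (INR p + 4) * (INR p + 3) + (3/16) * (5)^2 * 5^p * (INR p + 4) * (INR p + 3) + (1/2) * (-3)^1 * ((-1)^p * 3^p) * (INR p + 4) * (INR p + 3) * (INR p + 2) + (-2) * (-1)^1 * (-1)^p * (INR p + 4) * (INR p + 3) * (INR p + 2) + (-2) * (1)^1 * (INR p + 4) * (INR p + 3) * (INR p + 2) + (1/2) * (3)^1 * 3^p * (INR p + 4) * (INR p + 3) * (INR p + 2).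
Lemma co_G_eq p : co lG (4+p) = NumG p / (INR (fact p) * ((INR p + 1) * (INR p + 2) * (INR p + 3) * (INR p + 4))).
Proof. unfold lG, co, bas, NumG. cbn [Nat.leb Nat.sub pow Nat.add].
  repeat rewrite INR_fact_S. rewrite ?S_INR, ?np2, ?np3, ?np5, ?pow1.
  generalize (INR_fact_lt_0 p) (pos_INR p); intros. field; lra. Qed.

Lemma co_F1_nn n : 0 <= co lF1 n.
Proof.
  destruct n as [|[|p]].
  all: try (unfold lF1, co, bas; simpl; lra).
  change (0 <= co lF1 (2 + p)). rewrite co_F1_eq. apply div_nn;
  [| generalize (INR_fact_lt_0 p) (pos_INR p); intros; repeat apply Rmult_lt_0_compat; lra].
  generalize (pos_INR p); intro Hp0.
  destruct (Nat.Even_or_Odd p) as [[m Hm]|[m Hm]].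
  - assert (Hs : (-1)^p = 1) by (rewrite Hm; apply pow_1_even).
    assert (HN : NumF1 p = 0) by (unfold NumF1; rewrite Hs; field). rewrite HN; lra.
  - assert (Hs : (-1)^p = -1) by (rewrite Hm, Nat.add_1_r; apply pow_1_odd).
    assert (HN : NumF1 p = ((1))) by (unfold NumF1; rewrite Hs; field). rewrite HN.
    try assert (Hp1 : 1 <= INR p) by (rewrite Hm, plus_INR, mult_INR; simpl; generalize (pos_INR m); lra).
    first [nra | (apply Rmult_le_pos; [apply pow_le; lra | nra])].
Qed.

Lemma co_F2_nn n : 0 <= co lF2 n.
Proof.
  destruct n as [|[|p]].
  all: try (unfold lF2, co, bas; simpl; lra).
  change (0 <= co lF2 (2 + p)). rewrite co_F2_eq. apply div_nn;
  [| generalize (INR_fact_lt_0 p) (pos_INR p); intros; repeat apply Rmult_lt_0_compat; lra].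
  generalize (pos_INR p); intro Hp0.
  destruct (Nat.Even_or_Odd p) as [[m Hm]|[m Hm]].
  - assert (Hs : (-1)^p = 1) by (rewrite Hm; apply pow_1_even).
    assert (HN : NumF2 p = 0) by (unfold NumF2; rewrite Hs; field). rewrite HN; lra.
  - assert (Hs : (-1)^p = -1) by (rewrite Hm, Nat.add_1_r; apply pow_1_odd).
    assert (HN : NumF2 p = ((1) + (1) * INR p)) by (unfold NumF2; rewrite Hs; field). rewrite HN.
    try assert (Hp1 : 1 <= INR p) by (rewrite Hm, plus_INR, mult_INR; simpl; generalize (pos_INR m); lra).
    first [nra | (apply Rmult_le_pos; [apply pow_le; lra | nra])].
Qed.

Lemma co_F3_nn n : 0 <= co lF3 n.
Proof.
  destruct n as [|[|p]].
  all: try (unfold lF3, co, bas; simpl; lra).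
  change (0 <= co lF3 (2 + p)). rewrite co_F3_eq. apply div_nn;
  [| generalize (INR_fact_lt_0 p) (pos_INR p); intros; repeat apply Rmult_lt_0_compat; lra].
  generalize (pos_INR p); intro Hp0.
  destruct (Nat.Even_or_Odd p) as [[m Hm]|[m Hm]].
  - assert (Hs : (-1)^p = 1) by (rewrite Hm; apply pow_1_even).
    assert (HN : NumF3 p = 0) by (unfold NumF3; rewrite Hs; field). rewrite HN; lra.
  - assert (Hs : (-1)^p = -1) by (rewrite Hm, Nat.add_1_r; apply pow_1_odd).
    assert (HN : NumF3 p = 2^p * ((2))) by (unfold NumF3; rewrite Hs; field). rewrite HN.
    try assert (Hp1 : 1 <= INR p) by (rewrite Hm, plus_INR, mult_INR; simpl; generalize (pos_INR m); lra).
    first [nra | (apply Rmult_le_pos; [apply pow_le; lra | nra])].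
Qed.

Lemma co_F4_nn n : 0 <= co lF4 n.
Proof.
  destruct n as [|[|p]].
  all: try (unfold lF4, co, bas; simpl; lra).
  change (0 <= co lF4 (2 + p)). rewrite co_F4_eq. apply div_nn;
  [| generalize (INR_fact_lt_0 p) (pos_INR p); intros; repeat apply Rmult_lt_0_compat; lra].
  generalize (pos_INR p); intro Hp0.
  destruct (Nat.Even_or_Odd p) as [[m Hm]|[m Hm]].
  - assert (Hs : (-1)^p = 1) by (rewrite Hm; apply pow_1_even).
    assert (HN : NumF4 p = 0) by (unfold NumF4; rewrite Hs; field). rewrite HN; lra.
  - assert (Hs : (-1)^p = -1) by (rewrite Hm, Nat.add_1_r; apply pow_1_odd).
    assert (HN : NumF4 p = 2^p * ((2) + (2) * INR p)) by (unfold NumF4; rewrite Hs; field). rewrite HN.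
    try assert (Hp1 : 1 <= INR p) by (rewrite Hm, plus_INR, mult_INR; simpl; generalize (pos_INR m); lra).
    first [nra | (apply Rmult_le_pos; [apply pow_le; lra | nra])].
Qed.

Lemma co_P1_nn n : 0 <= co lP1 n.
Proof.
  destruct n as [|[|p]].
  all: try (unfold lP1, co, bas; simpl; lra).
  change (0 <= co lP1 (2 + p)). rewrite co_P1_eq. apply div_nn;
  [| generalize (INR_fact_lt_0 p) (pos_INR p); intros; repeat apply Rmult_lt_0_compat; lra].
  generalize (pos_INR p); intro Hp0.
  destruct (Nat.Even_or_Odd p) as [[m Hm]|[m Hm]].
  - assert (Hs : (-1)^p = 1) by (rewrite Hm; apply pow_1_even).
    assert (HN : NumP1 p = 0) by (unfold NumP1; rewrite Hs; field). rewrite HN; lra.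
  - assert (Hs : (-1)^p = -1) by (rewrite Hm, Nat.add_1_r; apply pow_1_odd).
    assert (HN : NumP1 p = 2^p * ((-2) + (2) * INR p)) by (unfold NumP1; rewrite Hs; field). rewrite HN.
    try assert (Hp1 : 1 <= INR p) by (rewrite Hm, plus_INR, mult_INR; simpl; generalize (pos_INR m); lra).
    first [nra | (apply Rmult_le_pos; [apply pow_le; lra | nra])].
Qed.

Lemma co_P2_nn n : 0 <= co lP2 n.
Proof.
  destruct n as [|[|[|[|p]]]].
  all: try (unfold lP2, co, bas; simpl; lra).
  change (0 <= co lP2 (4 + p)). rewrite co_P2_eq. apply div_nn;
  [| generalize (INR_fact_lt_0 p) (pos_INR p); intros; repeat apply Rmult_lt_0_compat; lra].
  generalize (pos_INR p); intro Hp0.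
  destruct (Nat.Even_or_Odd p) as [[m Hm]|[m Hm]].
  - assert (Hs : (-1)^p = 1) by (rewrite Hm; apply pow_1_even).
    assert (HN : NumP2 p = 0) by (unfold NumP2; rewrite Hs; field). rewrite HN; lra.
  - assert (Hs : (-1)^p = -1) by (rewrite Hm, Nat.add_1_r; apply pow_1_odd).
    assert (HN : NumP2 p = 2^p * ((40) + (20) * INR p + (4) * INR p * INR p)) by (unfold NumP2; rewrite Hs; field). rewrite HN.
    try assert (Hp1 : 1 <= INR p) by (rewrite Hm, plus_INR, mult_INR; simpl; generalize (pos_INR m); lra).
    first [nra | (apply Rmult_le_pos; [apply pow_le; lra | nra])].
Qed.

Lemma co_P4_nn n : 0 <= co lP4 n.
Proof.
  destruct n as [|[|[|p]]].
  all: try (unfold lP4, co, bas; simpl; lra).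
  change (0 <= co lP4 (3 + p)). rewrite co_P4_eq. apply div_nn;
  [| generalize (INR_fact_lt_0 p) (pos_INR p); intros; repeat apply Rmult_lt_0_compat; lra].
  generalize (pos_INR p); intro Hp0.
  destruct (Nat.Even_or_Odd p) as [[m Hm]|[m Hm]].
  - assert (Hs : (-1)^p = 1) by (rewrite Hm; apply pow_1_even).
    assert (HN : NumP4 p = ((2) * INR p + (1) * INR p * INR p)) by (unfold NumP4; rewrite Hs; field). rewrite HN.
    try assert (Hp1 : 1 <= INR p) by (rewrite Hm, plus_INR, mult_INR; simpl; generalize (pos_INR m); lra).
    first [nra | (apply Rmult_le_pos; [apply pow_le; lra | nra])].
  - assert (Hs : (-1)^p = -1) by (rewrite Hm, Nat.add_1_r; apply pow_1_odd).
    assert (HN : NumP4 p = 0) by (unfold NumP4; rewrite Hs; field). rewrite HN; lra.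
Qed.

Lemma co_P5_nn n : 0 <= co lP5 n.
Proof.
  destruct n as [|[|[|[|[|[|p]]]]]].
  all: try (unfold lP5, co, bas; simpl; lra).
  change (0 <= co lP5 (6 + p)). rewrite co_P5_eq. apply div_nn;
  [| generalize (INR_fact_lt_0 p) (pos_INR p); intros; repeat apply Rmult_lt_0_compat; lra].
  generalize (pos_INR p); intro Hp0.
  destruct (Nat.Even_or_Odd p) as [[m Hm]|[m Hm]].
  - assert (Hs : (-1)^p = 1) by (rewrite Hm; apply pow_1_even).
    assert (HN : NumP5 p = 0) by (unfold NumP5; rewrite Hs; field). rewrite HN; lra.
  - assert (Hs : (-1)^p = -1) by (rewrite Hm, Nat.add_1_r; apply pow_1_odd).
    assert (HN : NumP5 p = 2^p * ((1440) + (6824/5) * INR p + (2364/5) * INR p * INR p + (72) * INR p * INR p * INR p + (4) * INR p * INR p * INR p * INR p)) by (unfold NumP5; rewrite Hs; field). rewrite HN.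
    try assert (Hp1 : 1 <= INR p) by (rewrite Hm, plus_INR, mult_INR; simpl; generalize (pos_INR m); lra).
    first [nra | (apply Rmult_le_pos; [apply pow_le; lra | nra])].
Qed.

Lemma co_G_nn n : 0 <= co lG n.
Proof.
  destruct n as [|[|[|[|p]]]].
  all: try (unfold lG, co, bas; simpl; lra).
  change (0 <= co lG (4 + p)). rewrite co_G_eq. apply div_nn;
  [| generalize (INR_fact_lt_0 p) (pos_INR p); intros; repeat apply Rmult_lt_0_compat; lra].
  generalize (pos_INR p); intro Hp0.
  destruct (Nat.Even_or_Odd p) as [[m Hm]|[m Hm]].
  - assert (Hs : (-1)^p = 1) by (rewrite Hm; apply pow_1_even).
    assert (HN : NumG p = 0) by (unfold NumG; rewrite Hs; field). rewrite HN; lra.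
  - assert (Hs : (-1)^p = -1) by (rewrite Hm, Nat.add_1_r; apply pow_1_odd).
    assert (HN : NumG p = 5^p * ((-3325/16) + (-175/4) * INR p + (75/8) * INR p * INR p) + 3^p * ((3933/16) + (699/4) * INR p + (315/8) * INR p * INR p + (3) * INR p * INR p * INR p) + ((-467/8) + (-165/2) * INR p + (-33) * INR p * INR p + (-4) * INR p * INR p * INR p)) by (unfold NumG; rewrite Hs; field). rewrite HN.
    clear HN Hs. subst p.
    destruct m as [|[|[|[|m]]]].
    1-4: simpl; lra.
    replace (2 * S (S (S (S m))) + 1)%nat with (9 + 2*m)%nat by lia.
    rewrite !pow_add, !pow_mult, plus_INR, mult_INR.
    assert (HY := bern 24 m ltac:(lra)). assert (HZ : 0 <= (3^2)^m) by (apply pow_le; lra).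
    generalize (pos_INR m); intro Hr.
    replace (1 + 24) with (5^2) in HY by ring.
    set (Y := (5^2)^m) in *. set (Z := (3^2)^m) in *. set (r := INR m) in *.
    simpl INR.
    assert (HQ5 : 0 <= (-3325/16) + (-175/4) * (9 + 2*r) + (75/8) * (9 + 2*r) * (9 + 2*r)) by nra.
    assert (HQ3 : 0 <= (3933/16) + (699/4) * (9 + 2*r) + (315/8) * (9 + 2*r) * (9 + 2*r) + (3) * (9 + 2*r) * (9 + 2*r) * (9 + 2*r)) by nra.
    assert (H1 : 0 <= (Y - (1 + r*24)) * ((-3325/16) + (-175/4) * (9 + 2*r) + (75/8) * (9 + 2*r) * (9 + 2*r))) by (apply Rmult_le_pos; lra).
    assert (H2 : 0 <= Z * 3^9 * ((3933/16) + (699/4) * (9 + 2*r) + (315/8) * (9 + 2*r) * (9 + 2*r) + (3) * (9 + 2*r) * (9 + 2*r) * (9 + 2*r))) by (apply Rmult_le_pos; [apply Rmult_le_pos; lra| lra]).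
    nra.
Qed.


Lemma e0 x : exp (0*x) = 1. Proof. rewrite Rmult_0_l; apply exp_0. Qed.
Lemma e1 x : exp (1*x) = exp x. Proof. now rewrite Rmult_1_l. Qed.
Lemma e2 x : exp (2*x) = exp x ^ 2. Proof. replace (2*x) with (x+x) by ring. rewrite exp_plus; ring. Qed.
Lemma e3 x : exp (3*x) = exp x ^ 3. Proof. replace (3*x) with (x+x+x) by ring. rewrite !exp_plus; ring. Qed.
Lemma e5 x : exp (5*x) = exp x ^ 5. Proof. replace (5*x) with (x+x+x+x+x) by ring. rewrite !exp_plus; ring. Qed.
Lemma em1 x : exp (-1*x) = / exp x. Proof. replace (-1*x) with (-x) by ring. apply exp_Ropp. Qed.
Lemma em2 x : exp (-2*x) = / exp x ^ 2. Proof. replace (-2*x) with (-(2*x)) by ring. rewrite exp_Ropp, e2. field; first [apply pow_nonzero; apply Rgt_not_eq, exp_pos | apply Rgt_not_eq, exp_pos]. Qed.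
Lemma em3 x : exp (-3*x) = / exp x ^ 3. Proof. replace (-3*x) with (-(3*x)) by ring. rewrite exp_Ropp, e3. field; first [apply pow_nonzero; apply Rgt_not_eq, exp_pos | apply Rgt_not_eq, exp_pos]. Qed.
Lemma em5 x : exp (-5*x) = / exp x ^ 5. Proof. replace (-5*x) with (-(5*x)) by ring. rewrite exp_Ropp, e5. field; first [apply pow_nonzero; apply Rgt_not_eq, exp_pos | apply Rgt_not_eq, exp_pos]. Qed.
Ltac eprw := rewrite ?e0, ?e1, ?e2, ?e3, ?e5, ?em1, ?em2, ?em3, ?em5, ?exp_Ropp.

Definition fF1 x := sinh x - x.
Definition fF2 x := x * cosh x - sinh x.
Definition fF3 x := sinh x * cosh x - x.
Definition fF4 x := x + 2*x*(sinh x * sinh x) - sinh x * cosh x.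
Definition fP1 x := 3*x + 2*x*(sinh x * sinh x) - 3*(sinh x * cosh x).
Definition fP2 x := 2*(x*x)*(sinh x * cosh x - x) - fP1 x.
Definition fP4 x := x*x*sinh x + 3*sinh x - 3*x*cosh x.
Definition fP5 x := fP1 x - 2/5*(x*x)*(sinh x * cosh x - x) + 2*(x*x*x*x)*(sinh x * cosh x - x).
Definition fG x := 3*(x * cosh x - sinh x)*fF4 x*fF3 x
  - 5*x*(sinh x * sinh x)*(sinh x * sinh x * cosh x + sinh x * x - 2*(x*x)*cosh x).
Lemma ep_F1 x : ep lF1 x = fF1 x.
Proof. unfold lF1, fF1; simpl ep; unfold fF4, fF3, fP1, sinh, cosh; eprw.
  generalize (exp_pos x); intro. field. lra. Qed.
Lemma pos_F1 x : 0 < x -> 0 < fF1 x.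
Proof. intro Hx. rewrite <- ep_F1. apply (pseries_pos (co lF1) x _ 3 (ep_series _ _) Hx co_F1_nn).
  unfold lF1, co, bas; cbn [Nat.leb Nat.sub pow Nat.add]; repeat rewrite INR_fact_S; simpl; lra. Qed.
Lemma ep_F2 x : ep lF2 x = fF2 x.
Proof. unfold lF2, fF2; simpl ep; unfold fF4, fF3, fP1, sinh, cosh; eprw.
  generalize (exp_pos x); intro. field. lra. Qed.
Lemma pos_F2 x : 0 < x -> 0 < fF2 x.
Proof. intro Hx. rewrite <- ep_F2. apply (pseries_pos (co lF2) x _ 3 (ep_series _ _) Hx co_F2_nn).
  unfold lF2, co, bas; cbn [Nat.leb Nat.sub pow Nat.add]; repeat rewrite INR_fact_S; simpl; lra. Qed.
Lemma ep_F3 x : ep lF3 x = fF3 x.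
Proof. unfold lF3, fF3; simpl ep; unfold fF4, fF3, fP1, sinh, cosh; eprw.
  generalize (exp_pos x); intro. field. lra. Qed.
Lemma pos_F3 x : 0 < x -> 0 < fF3 x.
Proof. intro Hx. rewrite <- ep_F3. apply (pseries_pos (co lF3) x _ 3 (ep_series _ _) Hx co_F3_nn).
  unfold lF3, co, bas; cbn [Nat.leb Nat.sub pow Nat.add]; repeat rewrite INR_fact_S; simpl; lra. Qed.
Lemma ep_F4 x : ep lF4 x = fF4 x.
Proof. unfold lF4, fF4; simpl ep; unfold fF4, fF3, fP1, sinh, cosh; eprw.
  generalize (exp_pos x); intro. field. lra. Qed.
Lemma pos_F4 x : 0 < x -> 0 < fF4 x.
Proof. intro Hx. rewrite <- ep_F4. apply (pseries_pos (co lF4) x _ 3 (ep_series _ _) Hx co_F4_nn).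
  unfold lF4, co, bas; cbn [Nat.leb Nat.sub pow Nat.add]; repeat rewrite INR_fact_S; simpl; lra. Qed.
Lemma ep_P1 x : ep lP1 x = fP1 x.
Proof. unfold lP1, fP1; simpl ep; unfold fF4, fF3, fP1, sinh, cosh; eprw.
  generalize (exp_pos x); intro. field. lra. Qed.
Lemma pos_P1 x : 0 < x -> 0 < fP1 x.
Proof. intro Hx. rewrite <- ep_P1. apply (pseries_pos (co lP1) x _ 5 (ep_series _ _) Hx co_P1_nn).
  unfold lP1, co, bas; cbn [Nat.leb Nat.sub pow Nat.add]; repeat rewrite INR_fact_S; simpl; lra. Qed.
Lemma ep_P2 x : ep lP2 x = fP2 x.
Proof. unfold lP2, fP2; simpl ep; unfold fF4, fF3, fP1, sinh, cosh; eprw.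
  generalize (exp_pos x); intro. field. lra. Qed.
Lemma pos_P2 x : 0 < x -> 0 < fP2 x.
Proof. intro Hx. rewrite <- ep_P2. apply (pseries_pos (co lP2) x _ 5 (ep_series _ _) Hx co_P2_nn).
  unfold lP2, co, bas; cbn [Nat.leb Nat.sub pow Nat.add]; repeat rewrite INR_fact_S; simpl; lra. Qed.
Lemma ep_P4 x : ep lP4 x = fP4 x.
Proof. unfold lP4, fP4; simpl ep; unfold fF4, fF3, fP1, sinh, cosh; eprw.
  generalize (exp_pos x); intro. field. lra. Qed.
Lemma pos_P4 x : 0 < x -> 0 < fP4 x.
Proof. intro Hx. rewrite <- ep_P4. apply (pseries_pos (co lP4) x _ 5 (ep_series _ _) Hx co_P4_nn).
  unfold lP4, co, bas; cbn [Nat.leb Nat.sub pow Nat.add]; repeat rewrite INR_fact_S; simpl; lra. Qed.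
Lemma ep_P5 x : ep lP5 x = fP5 x.
Proof. unfold lP5, fP5; simpl ep; unfold fF4, fF3, fP1, sinh, cosh; eprw.
  generalize (exp_pos x); intro. field. lra. Qed.
Lemma pos_P5 x : 0 < x -> 0 < fP5 x.
Proof. intro Hx. rewrite <- ep_P5. apply (pseries_pos (co lP5) x _ 7 (ep_series _ _) Hx co_P5_nn).
  unfold lP5, co, bas; cbn [Nat.leb Nat.sub pow Nat.add]; repeat rewrite INR_fact_S; simpl; lra. Qed.
Lemma ep_G x : ep lG x = fG x.
Proof. unfold lG, fG; simpl ep; unfold fF4, fF3, fP1, sinh, cosh; eprw.
  generalize (exp_pos x); intro. field. lra. Qed.
Lemma pos_G x : 0 < x -> 0 < fG x.
Proof. intro Hx. rewrite <- ep_G. apply (pseries_pos (co lG) x _ 11 (ep_series _ _) Hx co_G_nn).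
  unfold lG, co, bas; cbn [Nat.leb Nat.sub pow Nat.add]; repeat rewrite INR_fact_S; simpl; lra. Qed.

Lemma incr_on (f f' : R -> R) a b :
  (forall t, a <= t <= b -> is_derive f t (f' t)) ->
  (forall t, a <= t <= b -> 0 < f' t) -> a < b -> f a < f b.
Proof.
  intros Hd Hp Hab.
  destruct (MVT_cor2 f f' a b Hab) as [c [Hc Hc2]].
  { intros t Ht. apply is_derive_Reals. apply Hd; lra. }
  assert (0 < f' c) by (apply Hp; lra).
  assert (0 < f' c * (b - a)) by (apply Rmult_lt_0_compat; lra). lra.
Qed.

Lemma incr_pos (f f' : R -> R) :
  (forall t, 0 < t -> is_derive f t (f' t)) ->
  (forall t, 0 < t -> 0 < f' t) ->
  (forall y eta, 0 < y -> 0 < eta -> exists e, 0 < e < y /\ - eta < f e) ->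
  forall x, 0 < x -> 0 < f x.
Proof.
  intros Hd Hp Hl x Hx.
  assert (Hm : forall a b, 0 < a -> a < b -> f a < f b).
  { intros a b Ha Hab. apply (incr_on f f'); auto.
    intros; apply Hd; lra. intros; apply Hp; lra. }
  assert (Hy : 0 <= f (x/2)).
  { destruct (Rle_or_lt 0 (f (x/2))) as [H|H]; auto.
    destruct (Hl (x/2) (- f (x/2)) ltac:(lra) ltac:(lra)) as [e [He Hfe]].
    specialize (Hm e (x/2) ltac:(lra) ltac:(lra)). lra. }
  specialize (Hm (x/2) x ltac:(lra) ltac:(lra)). lra.
Qed.

Lemma decr_neg (f f' : R -> R) d :
  (forall t, 0 < t < d -> is_derive f t (f' t)) ->
  (forall t, 0 < t < d -> f' t < 0) ->
  (forall y eta, 0 < y -> 0 < eta -> exists e, 0 < e < y /\ f e < eta) ->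
  forall x, 0 < x < d -> f x < 0.
Proof.
  intros Hd Hp Hl x Hx.
  assert (Hm : forall a b, 0 < a -> a < b -> b < d -> f b < f a).
  { intros a b Ha Hab Hbd.
    assert (- f a < - f b); [|lra].
    apply (incr_on (fun t => - f t) (fun t => - f' t)); auto.
    intros t Ht. exact (is_derive_opp _ _ _ (Hd t ltac:(lra))).
    intros t Ht. specialize (Hp t ltac:(lra)). lra. }
  assert (Hy : f (x/2) <= 0).
  { destruct (Rle_or_lt (f (x/2)) 0) as [H|H]; auto.
    destruct (Hl (x/2) (f (x/2)) ltac:(lra) ltac:(lra)) as [e [He Hfe]].
    specialize (Hm e (x/2) ltac:(lra) ltac:(lra) ltac:(lra)). lra. }
  specialize (Hm (x/2) x ltac:(lra) ltac:(lra) ltac:(lra)). lra.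
Qed.

Definition al x := ln (sinh x / x).
Definition alp x := (x*cosh x - sinh x)/(x*sinh x).

Ltac prep x := 
  let HE := fresh "HE" in let HE1 := fresh "HE1" in
  assert (HE : 0 < exp x) by apply exp_pos;
  assert (HE1 : 1 < exp x) by (generalize (exp_ineq1 x ltac:(lra)); lra).

Lemma der_J x : 0 < x -> 0 < sinh x ->
  is_derive (fun x => x*x/6 - ln (sinh x / x)) x (x/3 - alp x).
Proof.
  intros Hx Hs. assert (Hsx : 0 < sinh x / x) by (apply Rdiv_lt_0_compat; auto).
  prep x. unfold alp, sinh, cosh in *. auto_derive.
  - repeat split; auto. lra.
  - rewrite exp_Ropp in *. set (E := exp x) in *. field. repeat split; nra.
Qed.

Lemma der_K x : 0 < x -> 0 < sinh x -> 0 < fF3 x -> 0 < fF4 x ->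
  is_derive (fun x => 6/5 * ln (sinh x / x) - ln (fF4 x / (2 * fF3 x))) x
    (6/5 * alp x - (4*x*sinh x*cosh x / fF4 x - 2*(sinh x*sinh x)/fF3 x)).
Proof.
  intros Hx Hs H3 H4. assert (Hsx : 0 < sinh x / x) by (apply Rdiv_lt_0_compat; auto).
  assert (H34 : 0 < fF4 x / (2 * fF3 x)) by (apply Rdiv_lt_0_compat; lra).
  prep x.
  assert (H3' : 0 < (exp x * exp x - 1) * (exp x * exp x + 1) - x * (exp x * 2 * (exp x * 2))).
  { replace ((exp x * exp x - 1) * (exp x * exp x + 1) - x * (exp x * 2 * (exp x * 2))) with (4*(exp x*exp x)*fF3 x).
    apply Rmult_lt_0_compat; nra. unfold fF3, sinh, cosh; rewrite exp_Ropp; field; lra. }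
  assert (H4' : 0 < (x * (exp x * (exp x * 2)) + x * ((exp x * exp x - 1) * (exp x * exp x - 1))) * 4 -
 (exp x * exp x - 1) * (exp x * exp x + 1) * 2).
  { replace ((x * (exp x * (exp x * 2)) + x * ((exp x * exp x - 1) * (exp x * exp x - 1))) * 4 -
 (exp x * exp x - 1) * (exp x * exp x + 1) * 2) with (8*(exp x*exp x)*fF4 x).
    apply Rmult_lt_0_compat; nra. unfold fF4, sinh, cosh; rewrite exp_Ropp; field; lra. }
  unfold alp, fF3, fF4, sinh, cosh in *. auto_derive.
  - repeat split; auto; lra.
  - rewrite exp_Ropp in *. set (E := exp x) in *. field. repeat split; try nra.
Qed.

Lemma der_H q x : 0 < x -> 0 < sinh x -> 0 < q -> 1 <= sinh x / x ->
  is_derive (fun x => q * ln (cosh x) - ln (2 * exp (q * ln (sinh x / x)) - exp (- (q * ln (sinh x / x))))) x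
   (q * (sinh x / cosh x) - q * alp x * (2 * exp (q * ln (sinh x / x)) * exp (q * ln (sinh x / x)) + 1)
      / (2 * exp (q * ln (sinh x / x)) * exp (q * ln (sinh x / x)) - 1)).
Proof.
  intros Hx Hs Hq H1. assert (Hsx : 0 < sinh x / x) by (apply Rdiv_lt_0_compat; auto).
  assert (He : 1 <= exp (q * ln (sinh x / x))).
  { rewrite <- exp_0. destruct (Req_dec (sinh x / x) 1) as [E|E]. rewrite E, ln_1, Rmult_0_r. lra.
    left. apply exp_increasing. apply Rmult_lt_0_compat; auto. rewrite <- ln_1. apply ln_increasing; lra. }
  assert (Hem : exp (- (q * ln (sinh x / x))) = / exp (q * ln (sinh x / x))) by apply exp_Ropp.
  assert (Hd : 0 < 2 * exp (q * ln (sinh x / x)) - exp (- (q * ln (sinh x / x)))).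
  { rewrite Hem. set (e := exp _) in *. assert (/ e <= 1). { rewrite <- Rinv_1. apply Rinv_le_contravar; lra. } lra. }
  assert (Hc : 0 < cosh x) by (unfold cosh; generalize (exp_pos x) (exp_pos (-x)); lra).
  prep x. unfold alp. auto_derive.
  - unfold sinh, cosh in *. repeat split; auto; lra.
  - change (exp (- (q * ln (sinh x * / x)))) with (exp (- (q * ln (sinh x / x)))).
    rewrite Hem.
    change (exp (q * ln (sinh x * / x))) with (exp (q * ln (sinh x / x))).
    set (e := exp (q * ln (sinh x / x))) in *. clearbody e.
    unfold sinh, cosh in *. rewrite !exp_Ropp in *. set (E := exp x) in *. field. repeat split; try nra.
Qed.

Lemma sg_D x : 0 < x -> 0 < sinh x ->
  3 * alp x - sinh x / cosh x = fP1 x / (x * sinh x * cosh x).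
Proof. intros Hx Hs. prep x. unfold alp, fP1, sinh, cosh in *. rewrite !exp_Ropp in *.
  set (E := exp x) in *. field. repeat split; nra. Qed.

Lemma sg_J x : 0 < x -> 0 < sinh x ->
  x/3 - alp x = fP4 x / (3 * x * sinh x).
Proof. intros Hx Hs. prep x. unfold alp, fP4, sinh, cosh in *. rewrite !exp_Ropp in *.
  set (E := exp x) in *. field. repeat split; nra. Qed.

Lemma sg_H q x e : 0 < x -> 0 < sinh x -> 2*e*e - 1 <> 0 ->
  q * (sinh x / cosh x) - q * alp x * (2*e*e + 1) / (2*e*e - 1)
  = q * (2*e*e*fF3 x - fF4 x) / (x * sinh x * cosh x * (2*e*e - 1)).
Proof. intros Hx Hs He. prep x. unfold alp, fF3, fF4, sinh, cosh in *. rewrite !exp_Ropp in *.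
  set (E := exp x) in *. field. repeat split; try nra. Qed.

Lemma sg_K x : 0 < x -> 0 < sinh x -> 0 < fF3 x -> 0 < fF4 x ->
  6/5 * alp x - (4*x*sinh x*cosh x / fF4 x - 2*(sinh x*sinh x)/fF3 x)
  = 2 * fG x / (5 * x * sinh x * fF4 x * fF3 x).
Proof. intros Hx Hs H3 H4. prep x.
  assert (H3' : 0 < (exp x * exp x - 1) * (exp x * exp x + 1) - x * (exp x * 2 * (exp x * 2))).
  { replace ((exp x * exp x - 1) * (exp x * exp x + 1) - x * (exp x * 2 * (exp x * 2))) with (4*(exp x*exp x)*fF3 x).
    apply Rmult_lt_0_compat; nra. unfold fF3, sinh, cosh; rewrite exp_Ropp; field; lra. }
  assert (H4' : 0 < (x * (exp x * (exp x * 2)) + x * ((exp x * exp x - 1) * (exp x * exp x - 1))) * 4 -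
 (exp x * exp x - 1) * (exp x * exp x + 1) * 2).
  { replace ((x * (exp x * (exp x * 2)) + x * ((exp x * exp x - 1) * (exp x * exp x - 1))) * 4 -
 (exp x * exp x - 1) * (exp x * exp x + 1) * 2) with (8*(exp x*exp x)*fF4 x).
    apply Rmult_lt_0_compat; nra. unfold fF4, sinh, cosh; rewrite exp_Ropp; field; lra. }
  unfold alp, fG, fF3, fF4, sinh, cosh in *. rewrite !exp_Ropp in *.
  set (E := exp x) in *. field. repeat split; try nra.
Qed.



Lemma cosh_pos x : 0 < cosh x.
Proof. unfold cosh; generalize (exp_pos x) (exp_pos (-x)); lra. Qed.

Lemma cosh_ge1 x : 1 <= cosh x.
Proof. unfold cosh. rewrite exp_Ropp. generalize (exp_pos x); intro HE. set (E := exp x) in *.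
  assert (H : (E + / E)/2 - 1 = (E - 1) * (E - 1) / (2 * E)) by (field; lra).
  assert (0 <= (E - 1) * (E - 1) / (2 * E)).
  { apply div_nn. exact (Rle_0_sqr (E-1)). lra. } lra. Qed.

Lemma ln_le_sub1 z : 0 < z -> ln z <= z - 1.
Proof. intro Hz. rewrite <- (exp_ln z) at 2 by exact Hz. generalize (exp_ineq1_le (ln z)). lra. Qed.

Lemma exp_le_inv u : u < 1 -> exp u <= / (1 - u).
Proof. intro Hu. generalize (exp_ineq1_le (-u)). rewrite exp_Ropp. intro H.
  generalize (exp_pos u); intro He.
  apply Rmult_le_reg_l with (1 - u). lra. rewrite Rinv_r by lra.
  apply Rmult_le_reg_r with (/ exp u). apply Rinv_0_lt_compat; lra.
  rewrite Rmult_assoc, Rinv_r by lra. lra. Qed.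

Lemma small y eta : 0 < y -> 0 < eta -> exists e, 0 < e < y /\ cosh e - 1 < eta /\ e * e < eta.
Proof.
  intros Hy Heta. set (e := Rmin (y/2) (Rmin (eta/2) (1/2))).
  assert (He0 : 0 < e) by (unfold e; repeat apply Rmin_glb_lt; lra).
  assert (He1 : e <= y/2) by apply Rmin_l.
  assert (He2 : e <= eta/2) by (unfold e; eapply Rle_trans; [apply Rmin_r|apply Rmin_l]).
  assert (He3 : e <= 1/2) by (unfold e; eapply Rle_trans; [apply Rmin_r|apply Rmin_r]).
  exists e. split; [lra|]. split.
  - unfold cosh. generalize (exp_le_inv e ltac:(lra)); intro H1.
    assert (H2 : exp (- e) <= 1) by (rewrite <- exp_0; apply exp_le_3 || (left; apply exp_increasing; lra)).
    assert (H3 : / (1 - e) <= 1 + 2 * e).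
    { apply Rmult_le_reg_l with (1 - e). lra. rewrite Rinv_r by lra. nra. }
    lra.
  - nra.
Qed.

Lemma pos3 a b c : 0 < a -> 0 < b -> 0 < c -> 0 < a*b*c.
Proof. intros; repeat apply Rmult_lt_0_compat; auto. Qed.

Lemma facts x : 0 < x ->
  x < sinh x /\ sinh x < x * cosh x /\ 0 < fF3 x /\ 0 < fF4 x /\ 1 < sinh x / x /\ sinh x / x <= cosh x.
Proof.
  intro Hx. generalize (pos_F1 x Hx) (pos_F2 x Hx) (pos_F3 x Hx) (pos_F4 x Hx).
  unfold fF1, fF2. intros H1 H2 H3 H4. repeat split; try lra.
  - apply Rmult_lt_reg_r with x; auto. unfold Rdiv; rewrite Rmult_assoc, Rinv_l by lra. lra.
  - apply Rmult_le_reg_r with x; auto. unfold Rdiv; rewrite Rmult_assoc, Rinv_l by lra. lra.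
Qed.

Lemma al_pos x : 0 < x -> 0 < ln (sinh x / x).
Proof. intro Hx. destruct (facts x Hx) as (_&_&_&_&H&_). rewrite <- ln_1. apply ln_increasing; lra. Qed.

Lemma al_le x : 0 < x -> ln (sinh x / x) <= cosh x - 1.
Proof. intro Hx. destruct (facts x Hx) as (_&_&_&_&H&H'). eapply Rle_trans; [|apply ln_le_sub1; apply cosh_pos].
  destruct H' as [H'|H']. left; apply ln_increasing; lra. rewrite H'; lra. Qed.

Lemma lncosh_le x : ln (cosh x) <= cosh x - 1.
Proof. apply ln_le_sub1; apply cosh_pos. Qed.

Lemma der_D x : 0 < x -> 0 < sinh x -> is_derive (fun x => 3 * ln (sinh x / x) - ln (cosh x)) x
  (3 * ((x*cosh x - sinh x)/(x*sinh x)) - sinh x / cosh x).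
Proof.
  intros Hx Hs. assert (Hsx : 0 < sinh x / x) by (apply Rdiv_lt_0_compat; auto).
  assert (Hc : 0 < cosh x) by (unfold cosh; generalize (exp_pos x) (exp_pos (-x)); lra).
  assert (HE1 : 1 < exp x) by (generalize (exp_ineq1 x ltac:(lra)); lra).
  unfold sinh, cosh in *. auto_derive.
  - repeat split; auto. lra.
  - generalize (exp_pos x); intro HE. rewrite exp_Ropp in *. set (E := exp x) in *.
    field. repeat split; nra.
Qed.

Lemma D_pos x : 0 < x -> 0 < 3 * ln (sinh x / x) - ln (cosh x).
Proof.
  apply (incr_pos (fun x => 3 * ln (sinh x / x) - ln (cosh x)) (fun t => 3 * alp t - sinh t / cosh t)).
  - intros t Ht. apply der_D; auto. destruct (facts t Ht); lra.
  - intros t Ht. destruct (facts t Ht) as (H1&_). rewrite sg_D by lra.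
    apply Rdiv_lt_0_compat. apply pos_P1; auto.
    apply pos3; try lra; apply cosh_pos.
  - intros y eta Hy Heta. destruct (small y eta Hy Heta) as [e [He [Hc _]]].
    exists e. split; auto. generalize (al_pos e ltac:(lra)) (lncosh_le e). lra.
Qed.

Lemma J_pos x : 0 < x -> 0 < x*x/6 - ln (sinh x / x).
Proof.
  apply (incr_pos (fun x => x*x/6 - ln (sinh x / x)) (fun t => t/3 - alp t)).
  - intros t Ht. apply der_J; auto. destruct (facts t Ht); lra.
  - intros t Ht. destruct (facts t Ht) as (H1&_). rewrite sg_J by lra.
    apply Rdiv_lt_0_compat. apply pos_P4; auto.
    apply pos3; lra.
  - intros y eta Hy Heta. destruct (small y eta Hy Heta) as [e [He [Hc _]]].
    exists e. split; auto. generalize (al_le e ltac:(lra)). nra.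
Qed.

Lemma F4_eq x : fF4 x = fP1 x + 2 * fF3 x.
Proof. unfold fF4, fP1, fF3. ring. Qed.
Lemma P2_eq x : fP2 x = 2 * (x*x) * fF3 x - fP1 x.
Proof. unfold fP2, fP1, fF3. ring. Qed.
Lemma P5_eq x : fP5 x = fP1 x - 2/5*(x*x)*fF3 x + 2*(x*x*x*x)*fF3 x.
Proof. unfold fP5, fP1, fF3. ring. Qed.

Lemma K_pos x : 0 < x -> 0 < 6/5 * ln (sinh x / x) - ln (fF4 x / (2 * fF3 x)).
Proof.
  apply (incr_pos (fun x => 6/5 * ln (sinh x / x) - ln (fF4 x / (2 * fF3 x)))
     (fun t => 6/5 * alp t - (4*t*sinh t*cosh t / fF4 t - 2*(sinh t*sinh t)/fF3 t))).
  - intros t Ht. destruct (facts t Ht) as (H1&H2&H3&H4&_). apply der_K; auto; lra.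
  - intros t Ht. destruct (facts t Ht) as (H1&H2&H3&H4&_). rewrite sg_K by lra.
    apply Rdiv_lt_0_compat. generalize (pos_G t Ht); lra.
    assert (0 < 5 * t * sinh t) by (apply pos3; lra).
    apply Rmult_lt_0_compat; [apply Rmult_lt_0_compat|]; lra.
  - intros y eta Hy Heta. destruct (small y eta Hy Heta) as [e [He [_ Hee]]].
    exists e. split; auto. destruct (facts e ltac:(lra)) as (H1&H2&H3&H4&_).
    generalize (al_pos e ltac:(lra)); intro Ha.
    assert (HR : fF4 e / (2 * fF3 e) < 1 + e*e).
    { apply (Rmult_lt_reg_r (2*fF3 e)); [lra|]. unfold Rdiv; rewrite Rmult_assoc, Rinv_l by lra.
      generalize (pos_P2 e ltac:(lra)). rewrite P2_eq, F4_eq. intro. nra. }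
    assert (HR0 : 0 < fF4 e / (2 * fF3 e)) by (apply Rdiv_lt_0_compat; lra).
    generalize (ln_le_sub1 _ HR0). lra.
Qed.

Lemma exp_le a b : a <= b -> exp a <= exp b.
Proof. intros [H|H]. left; apply exp_increasing; auto. rewrite H; lra. Qed.

Definition Hfun q x := q * ln (cosh x) - ln (2 * exp (q * ln (sinh x / x)) - exp (- (q * ln (sinh x / x)))).

Lemma u_ge1 q x : 0 <= q -> 0 < x -> 1 <= exp (q * ln (sinh x / x)).
Proof. intros Hq Hx. rewrite <- exp_0. apply exp_le. generalize (al_pos x Hx). nra. Qed.

Lemma uu q x : exp (q * ln (sinh x / x)) * exp (q * ln (sinh x / x)) = exp (2 * q * ln (sinh x / x)).
Proof. rewrite <- exp_plus. f_equal. ring. Qed.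

Lemma H_pos q x : 3/5 <= q -> 0 < x -> 0 < Hfun q x.
Proof.
  intros Hq. unfold Hfun.
  apply (incr_pos (fun x => q * ln (cosh x) - ln (2 * exp (q * ln (sinh x / x)) - exp (- (q * ln (sinh x / x)))))
    (fun t => q * (sinh t / cosh t) - q * alp t * (2 * exp (q * ln (sinh t / t)) * exp (q * ln (sinh t / t)) + 1)
      / (2 * exp (q * ln (sinh t / t)) * exp (q * ln (sinh t / t)) - 1))).
  - intros t Ht. destruct (facts t Ht) as (H1&H2&H3&H4&H5&_). apply der_H; auto; lra.
  - intros t Ht. destruct (facts t Ht) as (H1&H2&H3&H4&H5&_).
    generalize (u_ge1 q t ltac:(lra) Ht); intro Hu.
    set (u := exp (q * ln (sinh t / t))) in *.
    assert (Huu : 1 <= u * u) by nra.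
    rewrite sg_H by lra.
    apply Rdiv_lt_0_compat.
    + apply Rmult_lt_0_compat; [lra|].
      assert (HK := K_pos t Ht).
      assert (HR0 : 0 < fF4 t / (2 * fF3 t)) by (apply Rdiv_lt_0_compat; lra).
      assert (HR : fF4 t / (2 * fF3 t) < exp (6/5 * ln (sinh t / t))).
      { rewrite <- (exp_ln _ HR0). apply exp_increasing. lra. }
      assert (HE : exp (6/5 * ln (sinh t / t)) <= u * u).
      { unfold u; rewrite uu. apply exp_le. generalize (al_pos t Ht). nra. }
      assert (fF4 t < 2 * fF3 t * (u*u)).
      { apply (Rmult_lt_reg_r (/ (2 * fF3 t))). apply Rinv_0_lt_compat; lra.
        rewrite (Rmult_comm (2 * fF3 t)), Rmult_assoc, Rinv_r by lra. fold (fF4 t / (2 * fF3 t)). lra. }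
      lra.
    + assert (0 < t * sinh t * cosh t) by (apply pos3; try lra; apply cosh_pos).
      apply Rmult_lt_0_compat; lra.
  - intros y eta Hy Heta. assert (Hq0 : 0 < 3 * q) by lra.
    destruct (small y (eta / (3*q)) Hy ltac:(apply Rdiv_lt_0_compat; lra)) as [e [He [Hc _]]].
    exists e. split; auto.
    generalize (al_le e ltac:(lra)) (al_pos e ltac:(lra)) (u_ge1 q e ltac:(lra) ltac:(lra)); intros Hal Hal0 Hu.
    generalize (lncosh_le e) (cosh_ge1 e); intros Hlc Hc1.
    assert (Hlc0 : 0 <= ln (cosh e)) by (rewrite <- ln_1; destruct Hc1 as [Hc1|Hc1]; [left; apply ln_increasing; lra| rewrite Hc1; lra]).
    rewrite exp_Ropp.
    set (a := ln (sinh e / e)) in *. set (u := exp (q * a)) in *.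
    assert (Hv : 0 < 2 * u - / u).
    { assert (/ u <= 1) by (rewrite <- Rinv_1; apply Rinv_le_contravar; lra). lra. }
    assert (Hb : 2 * u - / u <= u ^ 3).
    { apply (Rmult_le_reg_r u). lra. replace ((2 * u - / u) * u) with (2*u*u - 1) by (field; lra).
      simpl. generalize (Rle_0_sqr (u*u-1)); unfold Rsqr; intro; nra. }
    assert (Hl : ln (2 * u - / u) <= 3 * (q * a)).
    { replace (3 * (q * a)) with (ln (u ^ 3)). destruct Hb as [Hb|Hb]. left; apply ln_increasing; auto. rewrite Hb; lra.
      rewrite ln_pow by lra. unfold u; rewrite ln_exp. simpl; ring. }
    assert (3 * q * (cosh e - 1) < eta).
    { apply (Rmult_lt_reg_r (/ (3 * q))). apply Rinv_0_lt_compat; lra.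
      replace (3 * q * (cosh e - 1) * / (3 * q)) with (cosh e - 1) by (field; lra). exact Hc. }
    assert (3 * (q * a) <= 3 * q * (cosh e - 1)) by nra.
    nra.
Qed.

Lemma H_neg q : 0 < q < 3/5 -> exists d, 0 < d /\ forall x, 0 < x < d -> Hfun q x < 0.
Proof.
  intros Hq. set (b := 1/5 - q/3). assert (Hb : 0 < b) by (unfold b; lra).
  exists (b/2). split; [lra|]. unfold Hfun.
  apply (decr_neg (fun x => q * ln (cosh x) - ln (2 * exp (q * ln (sinh x / x)) - exp (- (q * ln (sinh x / x)))))
    (fun t => q * (sinh t / cosh t) - q * alp t * (2 * exp (q * ln (sinh t / t)) * exp (q * ln (sinh t / t)) + 1)
      / (2 * exp (q * ln (sinh t / t)) * exp (q * ln (sinh t / t)) - 1))).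
  - intros t Ht. destruct (facts t ltac:(lra)) as (H1&H2&H3&H4&H5&_). apply der_H; auto; lra.
  - intros t Ht. destruct (facts t ltac:(lra)) as (H1&H2&H3&H4&H5&_).
    generalize (u_ge1 q t ltac:(lra) ltac:(lra)); intro Hu.
    generalize (J_pos t ltac:(lra)); intro HJ.
    assert (HE : exp (q * ln (sinh t / t)) * exp (q * ln (sinh t / t)) <= exp (q/3 * (t*t))).
    { rewrite uu. apply exp_le. nra. }
    set (u := exp (q * ln (sinh t / t))) in *.
    assert (Huu : 1 <= u * u) by nra.
    assert (Hb1 : b < 1) by (unfold b; lra). assert (Hy : t * t < t) by nra.
    assert (HE2 : exp (q/3 * (t*t)) <= / (1 - q/3 * (t*t))) by (apply exp_le_inv; nra).
    assert (HE3 : / (1 - q/3 * (t*t)) < 1 + t*t/5 - t*t*(t*t)).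
    { apply (Rmult_lt_reg_l (1 - q/3 * (t*t))). nra. rewrite Rinv_r by nra.
      assert (Hy0 : 0 < t*t) by nra. assert (Hyb : t*t < b/2) by lra.
      set (y := t*t) in *. unfold b in Hyb.
      assert (0 < y * (1/5 - q/3 - 2*y)) by (apply Rmult_lt_0_compat; lra).
      assert (0 <= q * (y*y*y)) by (apply Rmult_le_pos; [lra| apply Rmult_le_pos; nra]).
      nra. }
    assert (HP5 := pos_P5 t ltac:(lra)). rewrite P5_eq in HP5.
    assert (HF := F4_eq t).
    assert (2 * fF3 t * (u*u) < fF4 t).
    { assert (u*u < 1 + t*t/5 - t*t*(t*t)) by lra. nra. }
    rewrite sg_H by lra.
    assert (0 < t * sinh t * cosh t * (2*u*u - 1)).
    { apply Rmult_lt_0_compat. apply pos3; try lra; apply cosh_pos. lra. }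
    assert (q * (2 * u * u * fF3 t - fF4 t) < 0).
    { assert (2 * u * u * fF3 t - fF4 t < 0) by nra. nra. }
    apply (Rmult_lt_reg_r (t * sinh t * cosh t * (2*u*u - 1))). auto.
    unfold Rdiv. rewrite Rmult_assoc, Rinv_l by lra. lra.
  - intros y eta Hy Heta.
    destruct (small y (eta / q) Hy ltac:(apply Rdiv_lt_0_compat; lra)) as [e [He [Hc _]]].
    exists e. split; auto.
    generalize (u_ge1 q e ltac:(lra) ltac:(lra)); intro Hu.
    generalize (lncosh_le e); intro Hlc.
    rewrite exp_Ropp.
    set (u := exp (q * ln (sinh e / e))) in *.
    assert (Hv : 1 <= 2 * u - / u).
    { assert (/ u <= 1) by (rewrite <- Rinv_1; apply Rinv_le_contravar; lra). lra. }
    assert (Hl : 0 <= ln (2 * u - / u)).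
    { rewrite <- ln_1. destruct Hv as [Hv|Hv]. left; apply ln_increasing; lra. rewrite Hv; lra. }
    assert (q * (cosh e - 1) < eta).
    { apply (Rmult_lt_reg_r (/ q)). apply Rinv_0_lt_compat; lra.
      replace (q * (cosh e - 1) * / q) with (cosh e - 1) by (field; lra). exact Hc. }
    assert (q * ln (cosh e) <= q * (cosh e - 1)) by (apply Rmult_le_compat_l; lra).
    lra.
Qed.



Lemma sum_form p x : 0 < x ->
  Rpower (sinh x / x) (2 * p) + Rpower (tanh x / x) p =
  exp (2 * p * ln (sinh x / x)) + exp (p * (ln (sinh x / x) - ln (cosh x))).
Proof.
  intro Hx. destruct (facts x Hx) as (H1&_). unfold Rpower.
  assert (Ht : tanh x / x = (sinh x / x) / cosh x).
  { unfold tanh. field. split; [lra|]. generalize (cosh_pos x); lra. }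
  rewrite Ht, (ln_div (sinh x / x) (cosh x)). reflexivity.
  apply Rdiv_lt_0_compat; lra. apply cosh_pos.
Qed.

Lemma case_pos p x : 0 < p -> 0 < x -> 
  exp (2 * p * ln (sinh x / x)) + exp (p * (ln (sinh x / x) - ln (cosh x))) > 2.
Proof.
  intros Hp Hx. set (a := ln (sinh x / x)). set (L := ln (cosh x)).
  assert (HD : 0 < 3 * a - L) by apply (D_pos x Hx).
  set (X := exp (p * a)). set (Y := exp (p * (a - L) / 2)).
  assert (HX : exp (2 * p * a) = X * X) by (unfold X; rewrite <- exp_plus; f_equal; ring).
  assert (HY : exp (p * (a - L)) = Y * Y) by (unfold Y; rewrite <- exp_plus; f_equal; field).
  assert (HXY : X * Y = exp (p * (3 * a - L) / 2)) by (unfold X, Y; rewrite <- exp_plus; f_equal; field).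
  assert (H1 : 1 < exp (p * (3 * a - L) / 2)).
  { rewrite <- exp_0. apply exp_increasing. apply Rdiv_lt_0_compat; [apply Rmult_lt_0_compat|]; lra. }
  rewrite HX, HY. generalize (Rle_0_sqr (X - Y)); unfold Rsqr; intro. nra.
Qed.

Lemma case_neg q x : 3/5 <= q -> 0 < x ->
  exp (2 * (-q) * ln (sinh x / x)) + exp ((-q) * (ln (sinh x / x) - ln (cosh x))) > 2.
Proof.
  intros Hq Hx. generalize (H_pos q x Hq Hx). unfold Hfun.
  set (a := ln (sinh x / x)). set (L := ln (cosh x)). intro HH.
  set (u := exp (q * a)) in *.
  assert (Hu : 0 < u) by apply exp_pos.
  assert (Hd : 0 < 2 * u - exp (- (q * a))).
  { generalize (u_ge1 q x ltac:(lra) Hx). fold a. fold u. intro Hu1. rewrite exp_Ropp. fold u.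
    assert (/ u <= 1) by (rewrite <- Rinv_1; apply Rinv_le_contravar; lra). lra. }
  assert (HL : 2 * u - exp (- (q * a)) < exp (q * L)).
  { rewrite <- (exp_ln _ Hd). apply exp_increasing. lra. }
  rewrite exp_Ropp in HL. fold u in HL.
  assert (E1 : exp (2 * - q * a) = / (u * u)).
  { unfold u. rewrite <- exp_plus, <- exp_Ropp. f_equal. ring. }
  assert (E2 : exp (- q * (a - L)) = exp (q * L) * / u).
  { unfold u. rewrite <- exp_Ropp, <- exp_plus. f_equal. ring. }
  rewrite E1, E2.
  assert (exp (q * L) * / u > (2 * u - / u) * / u).
  { apply Rmult_lt_compat_r. apply Rinv_0_lt_compat; lra. lra. }
  assert ((2 * u - / u) * / u = 2 - / (u * u)) by (field; lra).
  lra.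
Qed.

Lemma case_fail q : 0 < q < 3/5 -> exists x, 0 < x /\
  exp (2 * (-q) * ln (sinh x / x)) + exp ((-q) * (ln (sinh x / x) - ln (cosh x))) < 2.
Proof.
  intros Hq. destruct (H_neg q Hq) as [d [Hd HH]].
  exists (d/2). split; [lra|]. set (x := d/2). specialize (HH x ltac:(unfold x; lra)).
  unfold Hfun in HH. assert (Hx : 0 < x) by (unfold x; lra).
  set (a := ln (sinh x / x)) in *. set (L := ln (cosh x)) in *.
  set (u := exp (q * a)) in *.
  assert (Hu : 0 < u) by apply exp_pos.
  assert (Hd2 : 0 < 2 * u - exp (- (q * a))).
  { generalize (u_ge1 q x ltac:(lra) Hx). fold a. fold u. intro Hu1. rewrite exp_Ropp. fold u.
    assert (/ u <= 1) by (rewrite <- Rinv_1; apply Rinv_le_contravar; lra). lra. }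
  assert (HL : exp (q * L) < 2 * u - exp (- (q * a))).
  { rewrite <- (exp_ln _ Hd2). apply exp_increasing. lra. }
  rewrite exp_Ropp in HL. fold u in HL.
  assert (E1 : exp (2 * - q * a) = / (u * u)).
  { unfold u. rewrite <- exp_plus, <- exp_Ropp. f_equal. ring. }
  assert (E2 : exp (- q * (a - L)) = exp (q * L) * / u).
  { unfold u. rewrite <- exp_Ropp, <- exp_plus. f_equal. ring. }
  rewrite E1, E2.
  assert (exp (q * L) * / u < (2 * u - / u) * / u).
  { apply Rmult_lt_compat_r. apply Rinv_0_lt_compat; lra. lra. }
  assert ((2 * u - / u) * / u = 2 - / (u * u)) by (field; lra).
  lra.
Qed.

Theorem proposition4p7 (p : R) (hp : p <> 0) :
  (forall x : R, 0 < x ->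
     Rpower (sinh x / x) (2 * p) + Rpower (tanh x / x) p > 2)
  <-> (0 < p \/ p <= - (3 / 5)).
Proof.
  split.
  - intro Hall. destruct (Rlt_or_le 0 p) as [Hp|Hp]; [left; auto|].
    destruct (Rle_or_lt p (-(3/5))) as [Hp2|Hp2]; [right; auto|].
    exfalso. destruct (case_fail (-p) ltac:(lra)) as [x [Hx Hlt]].
    specialize (Hall x Hx). rewrite sum_form in Hall by auto.
    replace (- - p) with p in Hlt by ring. lra.
  - intros [Hp|Hp] x Hx; rewrite sum_form by auto.
    + apply case_pos; auto.
    + generalize (case_neg (-p) x ltac:(lra) Hx). replace (- - p) with p by ring. auto.
Qed.
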